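(* Let $N$ be a set of players and $S$ a set of strategies. Then there is an $|N|$-player canonical misinformation game $mG$ on $|S|$ strategies such that the length of the Adaptation Procedure on $mG$ satisfies $\mathfrak{L}_{\mathcal{AD}}(mG)=|S|$.
   Context: A normal-form game is $G=\langle N,S,P\rangle$ with finite players $N$, finite pure strategy sets $S_i$, positions (pure strategy profiles) $S=\times_i S_i$, payoffs $P_i:S\to\mathbb{R}$; $|S|$ is the number of positions. A misinformation game $mG=\langle G^0,G^1,\dots,G^{|N|}\rangle$ consists of the actual game $G^0$ and subjective games $G^i$; it is canonical if all $G^i=\langle N,S,P^i\rangle$ differ from $G^0$ only in payoffs and in every $G^i$ all players have equally many pure strategies. $NME(mG)$ is the set of profiles $\sigma=(\sigma_1,\dots,\sigma_{|N|})$ such that each $\sigma_i$ is player $i$'s component of some Nash equilibrium of $G^i$. $\chi(\sigma)=\mathrm{supp}(\sigma_1)\times\dots\times\mathrm{supp}(\sigma_{|N|})$. For $\vec v\in S$, $mG_{\vec v}$ is obtained by replacing, in every $P^i$ ($i\ge1$), the payoff vector at position $\vec v$ by $P^0(\vec v)$. For a set $M$ of misinformation games, $\mathcal{AD}(M)=\{mG_{\vec u}: mG\in M,\sigma\in NME(mG),\vec u\in\chi(\sigma)\}$, $\mathcal{AD}^{(0)}(M)=M$, $\mathcal{AD}^{(t+1)}(M)=\mathcal{AD}^{(t)}(\mathcal{AD}(M))$. The length $\mathfrak{L}_{\mathcal{AD}}(mG)$ is the least $t\ge0$ with $\mathcal{AD}^{(t+1)}(\{mG\})=\mathcal{AD}^{(t)}(\{mG\})$.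 *)

(* Defs.v *)
From HB Require Import structures.
From mathcomp Require Import all_boot all_order all_algebra.
From mathcomp Require Import reals.
Set Implicit Arguments. Unset Strict Implicit. Unset Printing Implicit Defensive.
Import Order.TTheory GRing.Theory Num.Theory.
Local Open Scope ring_scope.

Section MisGames.
Variables (R : realType) (n m : nat).
(* players are 'I_n, every player's pure strategies are 'I_m (canonical mG) *)

Definition position := {ffun 'I_n -> 'I_m}.

Definition payoff := position -> 'I_n -> R.

(* canonical misinformation game: actual game G^0 and subjective games G^i,
   all on the same players and strategy sets, differing only in payoffs *)
Record mgame := MGame { actual : payoff ; subj : 'I_n -> payoff }.

Definition is_mixed (s : 'I_m -> R) :=
  (forall a, 0 <= s a) /\ \sum_(a < m) s a = 1.

Definition exp_payoff (P : payoff) (s : 'I_n -> 'I_m -> R) (i : 'I_n) : R :=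
  \sum_(p : position) (\prod_(j < n) s j (p j)) * P p i.

Definition deviate (s : 'I_n -> 'I_m -> R) (i : 'I_n) (t : 'I_m -> R) :=
  fun j => if j == i then t else s j.

Definition is_NE (P : payoff) (s : 'I_n -> 'I_m -> R) :=
  (forall j, is_mixed (s j)) /\
  forall i t, is_mixed t -> exp_payoff P (deviate s i t) i <= exp_payoff P s i.

Definition NME (g : mgame) (sigma : 'I_n -> 'I_m -> R) :=
  forall i, exists tau, is_NE (subj g i) tau /\ tau i = sigma i.

Definition chi (sigma : 'I_n -> 'I_m -> R) (v : position) :=
  forall i, 0 < sigma i (v i).

Definition update (g : mgame) (v : position) : mgame :=
  MGame (actual g) (fun i p => if p == v then actual g v else subj g i p).

Definition mset := mgame -> Prop.

Definition AD (M : mset) : mset :=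
  fun g => exists h sigma u, [/\ M h, NME h sigma, chi sigma u & g = update h u].

Definition ADiter (t : nat) (M : mset) : mset := iter t AD M.

Definition mset_eq (A B : mset) := forall g, A g <-> B g.

Definition singleton_mset (g : mgame) : mset := fun h => h = g.

Definition AD_length_is (g : mgame) (L : nat) :=
  mset_eq (ADiter L.+1 (singleton_mset g)) (ADiter L (singleton_mset g)) /\
  forall t, (t < L)%N ->
    ~ mset_eq (ADiter t.+1 (singleton_mset g)) (ADiter t (singleton_mset g)).

End MisGames.

(* Main.v *)
Require Import Defs.
From mathcomp Require Import all_boot all_order all_algebra.
From mathcomp Require Import reals.
From Stdlib Require Import FunctionalExtensionality.
Set Implicit Arguments. Unset Strict Implicit. Unset Printing Implicit Defensive.
Import Order.TTheory GRing.Theory Num.Theory.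
Local Open Scope ring_scope.

Section Gen.
Variables (R : realType) (n m : nat).
Implicit Types (U V : {set position n m}).

Definition gU (A : payoff R n m) (F : 'I_n -> payoff R n m) U : mgame R n m :=
  MGame A (fun i p => if p \in U then A p else F i p).

Lemma update_gU A F U u : update (gU A F U) u = gU A F (u |: U).
Proof.
rewrite /update /gU /=; congr MGame.
apply: functional_extensionality => i; apply: functional_extensionality => p.
by rewrite in_setU1; case: eqP => [->|].
Qed.

Lemma gU_inj A F U V : (forall p, exists i j, F i p j != A p j) ->
  gU A F U = gU A F V -> U = V.
Proof.
move=> HF E; have E' := congr1 (@subj R n m) E; apply/setP => p.
have [i [j Hij]] := HF p.
have := congr1 (fun f => f i p j) E' => /=.
by case: (p \in U); case: (p \in V) => //= h; move: Hij; rewrite ?h eqxx.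
Qed.

Lemma AD_mono (M M' : mset R n m) : (forall g, M g -> M' g) -> forall g, AD M g -> AD M' g.
Proof. by move=> H g [h [s [u [Mh Nh Ch ->]]]]; exists h, s, u; split => //; apply: H. Qed.

Lemma AD_ext (M M' : mset R n m) : mset_eq M M' -> mset_eq (AD M) (AD M').
Proof. by move=> H g; split; apply: AD_mono => h; case: (H h). Qed.

Lemma exists_card k : (k <= #|position n m|)%N -> exists U : {set position n m}, #|U| = k.
Proof.
elim: k => [|k IH] Hk; first by exists set0; rewrite cards0.
have [U HU] := IH (ltnW Hk).
case: (pickP (fun x => x \notin U)) => [x Hx|H].
  by exists (x |: U); rewrite cardsU1 Hx HU.
have : U = setT by apply/setP => x; rewrite inE; move: (H x) => /negbFE.
by move=> E; move: Hk; rewrite -HU E cardsT ltnn.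
Qed.

Definition wt (s : 'I_n -> 'I_m -> R) (p : position n m) := \prod_(j < n) s j (p j).

Lemma wt_sum s : (forall j, is_mixed (s j)) -> \sum_(p : position n m) wt s p = 1.
Proof.
move=> Hs; rewrite /wt -(bigA_distr_bigA (fun j a => s j a)).
by rewrite big1 // => j _; case: (Hs j).
Qed.

Lemma wt_ge0 s : (forall j a, 0 <= s j a) -> forall p, 0 <= wt s p.
Proof. by move=> H p; apply: prodr_ge0 => j _. Qed.

Definition pureP (q : position n m) : 'I_n -> 'I_m -> R :=
  fun j a => if a == q j then 1 else 0.

Lemma pureP_mixed q j : is_mixed (pureP q j).
Proof.
split; first by move=> a; rewrite /pureP; case: eqP.
rewrite (bigD1 (q j)) //= /pureP eqxx big1 ?addr0 // => a /negbTE -> //.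
Qed.

Lemma wt_pure q p : wt (pureP q) p = if p == q then 1 else 0.
Proof.
case: eqP => [->|/eqP Hpq].
  by rewrite /wt big1 // => j _; rewrite /pureP eqxx.
case: (pickP (fun j => p j != q j)) => [j Hj|H].
  by rewrite /wt (bigD1 j) //= /pureP (negbTE Hj) mul0r.
by case/eqP: Hpq; apply/ffunP => j; apply/eqP; move: (H j) => /negbFE.
Qed.

Lemma exp_pure (P : payoff R n m) q i : exp_payoff P (pureP q) i = P q i.
Proof.
rewrite /exp_payoff (bigD1 q) //= -/(wt _ q) wt_pure eqxx mul1r big1 ?addr0 //.
by move=> p /negbTE Hp; rewrite -/(wt _ p) wt_pure Hp mul0r.
Qed.

Lemma deviate_mixed (s : 'I_n -> 'I_m -> R) (i : 'I_n) (t : 'I_m -> R) : (forall j, is_mixed (s j)) -> is_mixed t ->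
  forall j, is_mixed (deviate s i t j).
Proof. by move=> Hs Ht j; rewrite /deviate; case: eqP. Qed.

Lemma exp_wt (P : payoff R n m) s i : exp_payoff P s i = \sum_p wt s p * P p i.
Proof. by []. Qed.

End Gen.
Arguments pureP {R n m} q.

Section D2.
Variables (R : realType) (n m : nat).
Implicit Types (U V : {set position n m}).

Definition A2 : payoff R n m := fun p j => 0.
Definition F2 : 'I_n -> payoff R n m := fun i p j => if j == i then 0 else -1.
Definition g2 U := gU A2 F2 U.

Lemma NE2 U u i : exists tau, is_NE (subj (g2 U) i) tau /\ tau i = pureP u i.
Proof.
case: (pickP (fun q => (q \in U) && (q i == u i))) => [q /andP [qU qi] | H].
  exists (pureP q); split; last by rewrite /pureP (eqP qi).
  split; first exact: pureP_mixed.
  move=> k t Ht; rewrite exp_pure /= qU /A2.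
  rewrite exp_wt; apply: sumr_le0 => p _; apply: mulr_ge0_le0.
    apply: wt_ge0 => j a.
    by case: (deviate_mixed k (@pureP_mixed R n m q) Ht j) => ->.
  rewrite /= /A2 /F2; case: (p \in U) => //; case: (k == i) => //.
  by rewrite lerN10.
have uN : u \notin U by move: (H u); rewrite eqxx andbT => ->.
exists (pureP u); split => //; split; first exact: pureP_mixed.
move=> k t Ht; rewrite exp_pure exp_wt.
have Hd := deviate_mixed k (@pureP_mixed R n m u) Ht.
set S := subj (g2 U) i.
have E : forall p, wt (deviate (pureP u) k t) p * S p k =
                  wt (deviate (pureP u) k t) p * S u k.
  move=> p; rewrite /S /= /A2 /F2 (negbTE uN).
  case: (eqVneq k i) => [->|kni]; first by case: (p \in U); rewrite ?eqxx.
  idtac.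
  case: (eqVneq (p i) (u i)) => [Hpi|Hpi].
    by move: (H p); rewrite Hpi eqxx andbT => ->; rewrite (negbTE kni).
  rewrite /wt (bigD1 i) //= /deviate eq_sym (negbTE kni) /pureP (negbTE Hpi).
  by rewrite !mul0r.
by rewrite (eq_bigr _ (fun p _ => E p)) -mulr_suml wt_sum // mul1r.
Qed.

Lemma NME2 U u : NME (g2 U) (pureP u).
Proof. by move=> i; apply: NE2. Qed.

Lemma chi_pure (u : position n m) : chi (pureP (R:=R) u) u.
Proof. by move=> i; rewrite /pureP eqxx ltr01. Qed.

End D2.

Lemma setU1_in (T : finType) (v : T) (V : {set T}) : v \in V -> v |: V = V.
Proof. by move=> Hv; apply/setP => x; rewrite in_setU1; case: eqP => // ->; rewrite Hv. Qed.

Section C2.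
Variables (R : realType) (n m : nat).
Hypothesis n_gt1 : (1 < n)%N.
Hypothesis m_gt0 : (0 < m)%N.
Implicit Types (U V : {set position n m}).

Definition P2 (k : nat) : mset R n m :=
  fun g => exists U, (0 < #|U| <= k)%N /\ g = g2 R U.

Lemma g2_inj U V : g2 R U = g2 R V -> U = V.
Proof.
apply: gU_inj => p.
exists (Ordinal (ltnW n_gt1)), (Ordinal n_gt1).
by rewrite /F2 /A2 /= oppr_eq0 oner_eq0.
Qed.

Lemma AD2_base : mset_eq (AD (singleton_mset (g2 R (set0 : {set position n m})))) (P2 1).
Proof.
move=> g; split.
  move=> [h [s [u [-> _ _ ->]]]]; exists [set u].
  by rewrite cards1 /g2 update_gU setU0.
move=> [U [HU ->]].
have /cards1P [x ->] : #|U| == 1%N by rewrite eqn_leq andbC.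
exists (g2 R (set0 : {set position n m})), (pureP x), x; split => //.
- exact: NME2.
- exact: chi_pure.
- by rewrite /g2 update_gU setU0.
Qed.

Lemma AD2_step k : (0 < k)%N -> mset_eq (AD (P2 k)) (P2 k.+1).
Proof.
move=> k0 g; split.
  move=> [h [s [u [[U [HU ->]] _ _ ->]]]]; exists (u |: U).
  rewrite /g2 update_gU; split => //.
  rewrite cardsU1; case: (u \in U) => /=; move: HU; rewrite ?add0n ?add1n => /andP [a b].
    by rewrite a ltnW.
  by [].
move=> [V [HV ->]].
case/andP: HV => V0 Vk.
have /set0Pn [v Hv] : V != set0 by rewrite -card_gt0.
case: (leqP #|V| k) => Hk.
  exists (g2 R V), (pureP v), v; split.
  - by exists V; rewrite V0 Hk.
  - exact: NME2.
  - exact: chi_pure.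
  - by rewrite /g2 update_gU setU1_in.
exists (g2 R (V :\ v)), (pureP v), v; split.
- exists (V :\ v); split => //.
  have := cardsD1 v V; rewrite Hv add1n => E.
  have Ek : #|V| = k.+1 by apply/eqP; rewrite eqn_leq Vk Hk.
  by move: E; rewrite Ek => -[<-]; rewrite k0 leqnn.
- exact: NME2.
- exact: chi_pure.
- by rewrite /g2 update_gU setD1K.
Qed.

Lemma ADiter2 t : mset_eq (ADiter t.+1 (singleton_mset (g2 R (set0 : {set position n m})))) (P2 t.+1).
Proof.
elim: t => [|t IH]; first exact: AD2_base.
move=> g; rewrite /ADiter iterS.
have := AD_ext IH g; have := AD2_step (ltn0Sn t) g.
by move=> [a b] [c d]; split => ?; [apply: a; apply: c | apply: d; apply: b].
Qed.

Lemma length2 : AD_length_is (g2 R (set0 : {set position n m})) #|position n m|.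
Proof.
have N0 : (0 < #|position n m|)%N.
  by apply/card_gt0P; exists [ffun => Ordinal m_gt0].
split.
  move=> g; have [a b] := ADiter2 #|position n m| g.
  have := ADiter2 #|position n m|.-1 g; rewrite prednK // => -[c d].
  split => H.
    apply: d; have [U [HU ->]] := a H; exists U; rewrite max_card.
    by case/andP: HU => ->.
  apply: b; have [U [HU ->]] := c H; exists U.
  by case/andP: HU => -> /= H1; rewrite ltnW.
case=> [|t] Ht Heq.
  have [u _] : exists u : position n m, true by exists [ffun => Ordinal m_gt0].
  have H1 : ADiter 1 (singleton_mset (g2 R (set0 : {set position n m}))) (g2 R [set u]).
    by apply/(ADiter2 0); exists [set u]; rewrite cards1.
  have := proj1 (Heq _) H1; rewrite /ADiter /= /singleton_mset.
  move/g2_inj => /setP /(_ u); rewrite in_set1 eqxx inE //.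
have [U HU] := exists_card Ht.
have H1 : ADiter t.+2 (singleton_mset (g2 R (set0 : {set position n m}))) (g2 R U).
  by apply/(ADiter2 t.+1); exists U; rewrite HU leqnn.
have := proj1 (Heq _) H1; case/(ADiter2 t).
move=> V [HV /g2_inj E]; move: HV; rewrite -E HU.
by case/andP => _; rewrite ltnn.
Qed.

End C2.

Lemma card_full (T : finType) (U : {set T}) : #|U| = #|T| -> U = setT.
Proof.
move=> H; have := cardsC U; rewrite H -[RHS]addn0 => /eqP; rewrite eqn_add2l => /eqP.
by move/cards0_eq => E; rewrite -[U]setCK E setC0.
Qed.

Section C1.
Variables (R : realType) (m : nat).
Hypothesis m_gt0 : (0 < m)%N.
Local Notation pos := (position 1 m).
Implicit Types (U V : {set pos}).

Definition A1 : payoff R 1 m := fun p j => 0.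
Definition F1 : 'I_1 -> payoff R 1 m := fun i p j => 1.
Definition g1 U := gU A1 F1 U.

Lemma g1_inj U V : g1 U = g1 V -> U = V.
Proof. by apply: gU_inj => p; exists ord0, ord0; rewrite /F1 /A1 oner_eq0. Qed.

Lemma NME1 U u : (u \notin U) || (U == setT) -> NME (g1 U) (pureP u).
Proof.
move=> Hu i; exists (pureP u); split => //; split; first exact: pureP_mixed.
move=> k t Ht; rewrite exp_pure exp_wt /= /A1 /F1.
have Hd := deviate_mixed k (@pureP_mixed R 1 m u) Ht.
case/orP: Hu => [Hu|/eqP ->].
  rewrite (negbTE Hu).
  apply: (le_trans (y := \sum_p wt (deviate (pureP u) k t) p)); last by rewrite wt_sum.
  apply: ler_sum => p _.
  rewrite -[X in _ <= X]mulr1; apply: ler_wpM2l.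
    by apply: wt_ge0 => j a; case: (Hd j).
  by case: (p \in U); rewrite ?ler01.
rewrite big1 => [|p _]; last by rewrite in_setT /= mulr0.
by rewrite in_setT.
Qed.

Lemma NME1_supp U sigma u : U != setT -> NME (g1 U) sigma -> chi sigma u -> u \notin U.
Proof.
move=> UT HN Hc; apply/negP => uU.
have [v vU] : exists v, v \notin U.
  case: (pickP (fun x => x \notin U)) => [x Hx|H]; first by exists x.
  by case/eqP: UT; apply/setP => x; rewrite inE; move: (H x) => /negbFE.
have [tau [[Hm HNE] Htau]] := HN ord0.
have Hdev := HNE ord0 (pureP v ord0) (@pureP_mixed R 1 m v ord0).
have Ed : deviate tau ord0 (pureP v ord0) = pureP v.
  by apply: functional_extensionality => j; rewrite /deviate (ord1 j) eqxx.
rewrite Ed exp_pure /= /A1 /F1 (negbTE vU) exp_wt in Hdev.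
set S := subj (g1 U) ord0 in Hdev.
have Hnn : forall p : pos, true -> 0 <= wt tau p - wt tau p * S p ord0.
  move=> p _; rewrite subr_ge0 -[X in _ <= X]mulr1.
  apply: ler_wpM2l; first by apply: wt_ge0 => j a; case: (Hm j).
  by rewrite /S /= /A1 /F1; case: (p \in U); rewrite ?ler01.
have H0 : \sum_p (wt tau p - wt tau p * S p ord0) = 0.
  apply/eqP; rewrite eq_le; apply/andP; split.
    by rewrite sumrB wt_sum // subr_le0.
  by apply: sumr_ge0.
have := psumr_eq0P Hnn H0 (i := u) isT.
rewrite /S /= /A1 uU mulr0 subr0 /wt big_ord1 Htau => E.
by move: (Hc ord0); rewrite E ltxx.
Qed.


Definition Q1 (k : nat) : mset R 1 m := fun g => exists U, #|U| = k /\ g = g1 U.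

Lemma AD1_step k : (k < #|pos|)%N -> mset_eq (AD (Q1 k)) (Q1 k.+1).
Proof.
move=> kN g; split.
  move=> [h [s [u [[U [HU ->]] HN Hc ->]]]].
  have UT : U != setT.
    by apply/eqP => E; move: kN; rewrite -HU E cardsT ltnn.
  have uU := NME1_supp UT HN Hc.
  by exists (u |: U); rewrite cardsU1 uU HU /g1 update_gU.
move=> [V [HV ->]].
have /set0Pn [v Hv] : V != set0 by rewrite -card_gt0 HV.
exists (g1 (V :\ v)), (pureP v), v; split.
- exists (V :\ v); split => //.
  by have := cardsD1 v V; rewrite Hv HV add1n => -[].
- by apply: NME1; rewrite setD11.
- exact: chi_pure.
- by rewrite /g1 update_gU setD1K.
Qed.

Lemma AD1_full : mset_eq (AD (Q1 #|pos|)) (Q1 #|pos|).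
Proof.
move=> g; split.
  move=> [h [s [u [[U [HU ->]] HN Hc ->]]]].
  have E := card_full HU; subst U.
  by exists setT; rewrite cardsT /g1 update_gU setU1_in ?in_setT.
move=> [V [HV ->]].
have E := card_full HV; subst V.
pose u : pos := [ffun => Ordinal m_gt0].
exists (g1 setT), (pureP u), u; split.
- by exists setT; rewrite cardsT.
- by apply: NME1; rewrite eqxx orbT.
- exact: chi_pure.
- by rewrite /g1 update_gU setU1_in ?in_setT.
Qed.

Lemma ADiter1 t : (t <= #|pos|)%N ->
  mset_eq (ADiter t (singleton_mset (g1 set0))) (Q1 t).
Proof.
elim: t => [|t IH] Ht g.
  split; first by move=> ->; exists set0; rewrite cards0.
  by move=> [U [HU ->]]; rewrite (cards0_eq HU).
rewrite /ADiter iterS.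
have := AD_ext (IH (ltnW Ht)) g; have := AD1_step Ht g.
by move=> [a b] [c d]; split => ?; [apply: a; apply: c | apply: d; apply: b].
Qed.

Lemma length1 : AD_length_is (g1 set0) #|pos|.
Proof.
split.
  move=> g; rewrite /ADiter iterS.
  have := AD_ext (ADiter1 (leqnn _)) g; have := AD1_full g; have := ADiter1 (leqnn _) g.
  by move=> [a b] [c d] [e f]; split => ?; [apply: b; apply: c; apply: e | apply: f; apply: d; apply: a].
move=> t Ht Heq.
have [U HU] := exists_card Ht.
have H1 : ADiter t.+1 (singleton_mset (g1 set0)) (g1 U).
  by apply/(ADiter1 Ht); exists U.
have := proj1 (Heq _) H1; case/(ADiter1 (ltnW Ht)) => V [HV /g1_inj E].
by move: HV; rewrite -E HU => /eqP; rewrite eqn_leq ltnn.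
Qed.

End C1.

Local Close Scope ring_scope.
Lemma card_pos (n m : nat) : #|position n m| = m ^ n.
Proof. by rewrite /position card_ffun !card_ord. Qed.

Theorem proposition16 (R : realType) (n m : nat) :
  (0 < n)%N -> (0 < m)%N ->
  exists mG : mgame R n m, AD_length_is mG (m ^ n).
Proof.
case: n => [//|[|n]] _ m0.
  by exists (g1 R set0); rewrite -card_pos; apply: length1.
by exists (g2 R set0); rewrite -card_pos; apply: length2.
Qed.
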